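(* Let ${\bf B}$ and ${\bf C}$ be $n\times n$ matrices with non-negative entries, and let ${\bf A}$ be an $n\times n$ complex matrix satisfying $|[{\bf A}]_{i,j}|\le\sqrt{[{\bf B}]_{i,j}}\sqrt{[{\bf C}]_{i,j}}$ for all $i,j$. Then $\rho({\bf A})\le\sqrt{\rho({\bf B})}\sqrt{\rho({\bf C})}$. If furthermore $\max(\rho({\bf B}),\rho({\bf C}))<1$, then $\rho({\bf A})<1$ and $$\|({\bf I}_n-{\bf A})^{-1}\|_\infty\le\sqrt{\|({\bf I}_n-{\bf B})^{-1}\|_\infty}\sqrt{\|({\bf I}_n-{\bf C})^{-1}\|_\infty}.$$
   Context: $\rho(\cdot)$ denotes the spectral radius and $\|{\bf M}\|_\infty=\max_i\sum_j|M_{ij}|$. *)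

(* Defs.v *)
From HB Require Import structures.
From mathcomp Require Import all_boot all_order all_algebra.
From mathcomp Require Import classical_sets reals.
From mathcomp.real_closed Require Import complex.
Set Implicit Arguments. Unset Strict Implicit. Unset Printing Implicit Defensive.
Import Order.TTheory GRing.Theory Num.Theory.
Local Open Scope ring_scope.
Local Open Scope classical_set_scope.

(* Spectral radius of a complex square matrix: the largest modulus of an
   eigenvalue (sup of the finite set of moduli; 0 when n = 0). *)
Definition specrad (R : realType) (n : nat) (A : 'M[R[i]]_n) : R :=
  sup [set ComplexField.Normc.normc z | z in [set z : R[i] | eigenvalue A z]].

Definition normInfC (R : realType) (m n : nat) (M : 'M[R[i]]_(m, n)) : R :=
  \big[Num.max/0]_(i < m) \sum_(j < n) ComplexField.Normc.normc (M i j).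

Definition normInfR (R : realType) (m n : nat) (M : 'M[R]_(m, n)) : R :=
  \big[Num.max/0]_(i < m) \sum_(j < n) `|M i j|.

Definition cmx (R : realType) (m n : nat) (M : 'M[R]_(m, n)) : 'M[R[i]]_(m, n) :=
  map_mx (fun x : R => (x%:C)%C) M.

(* Main.v *)
Require Import Defs.
From HB Require Import structures.
From mathcomp Require Import all_boot all_order all_algebra.
From mathcomp Require Import classical_sets reals.
From mathcomp.real_closed Require Import complex.
From mathcomp Require Import ring lra.
Set Implicit Arguments. Unset Strict Implicit.
Import Order.TTheory GRing.Theory Num.Theory.
Local Open Scope ring_scope.

Section Reals.
Variable R : realType.
Implicit Types x y t r : R.

Lemma bern t r k : 0 < t -> t <= r -> t ^+ k.+1 + k%:R * t ^+ k * (r - t) <= t * r ^+ k.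
Proof.
move=> t0 tr; elim: k => [|k IH]; first by rewrite expr0 expr1 mulr1; lra.
have a0 : 0 <= t ^+ k by rewrite exprn_ge0 // ltW.
have k0 : 0 <= k%:R :> R by rewrite ler0n.
have r0 : 0 <= r by lra.
have h2 := ler_wpM2l r0 IH.
rewrite !exprS -natr1.
have h1 : 0 <= k%:R * (t ^+ k) * (r - t) * (r - t).
  by rewrite !mulr_ge0 // subr_ge0.
rewrite exprS in h2; move: h1 h2; set a := t ^+ k; set m := k%:R; move=> h1 h2. nra.
Qed.

Lemma bern2 t r k : 0 < t -> t <= r -> k%:R * t ^+ k * (r - t) <= t * r ^+ k.
Proof.
move=> t0 tr; have := @bern t r k t0 tr.
have : 0 <= t ^+ k.+1 by rewrite exprn_ge0 // ltW.
lra.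
Qed.

Lemma arch (c : R) : exists k : nat, c < k%:R.
Proof.
case: (lerP 0 c) => c0.
  by exists (Num.bound c); exact: archi_boundP.
by exists 0%N; lra.
Qed.


Lemma L0 x y (M : R) : 0 <= M -> (forall u, 0 < u -> u <= 1 -> x <= y + u * M) -> x <= y.
Proof.
move=> M0 H; rewrite leNgt; apply/negP => yx.
set e := x - y.
have e0 : 0 < e by rewrite /e; lra.
have Me : M + e != 0 by rewrite gt_eqF //; lra.
set u := e / (M + e).
have hu : u * (M + e) = e by rewrite /u mulfVK.
have u0 : 0 < u by rewrite /u divr_gt0 //; lra.
have ue : 0 < u * e by rewrite mulr_gt0.
have u1 : u <= 1 by rewrite /u ler_pdivrMr ?mul1r; lra.
have := H u u0 u1; rewrite /e in hu ue *; nra.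
Qed.

Lemma L1 x (b c : R) : 0 <= b -> 0 <= c ->
  (forall d, 0 < d -> d <= 1 -> x <= Num.sqrt (b + d) * Num.sqrt (c + d) + d) ->
  x <= Num.sqrt b * Num.sqrt c.
Proof.
move=> b0 c0 H; set L := b + c + 1.
apply: (@L0 _ _ (Num.sqrt L + 1)); first by have := sqrtr_ge0 L; lra.
move=> u u0 u1.
have d0 : 0 < u ^+ 2 by rewrite exprn_gt0.
have d1 : u ^+ 2 <= u by rewrite expr2; nra.
have := H _ d0 (le_trans d1 u1).
suff : Num.sqrt (b + u ^+ 2) * Num.sqrt (c + u ^+ 2) <=
         Num.sqrt b * Num.sqrt c + u * Num.sqrt L by lra.
have sb := sqrtr_ge0 b; have sc := sqrtr_ge0 c; have sL := sqrtr_ge0 L.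
have P0 : 0 <= Num.sqrt b * Num.sqrt c + u * Num.sqrt L.
  by rewrite addr_ge0 ?mulr_ge0 //; lra.
rewrite -sqrtrM; last by lra.
rewrite -[X in _ <= X](ger0_norm P0) -sqrtr_sqr ler_sqrt ?sqr_ge0 //.
have eb := sqr_sqrtr b0; have ec := sqr_sqrtr c0.
have eL : Num.sqrt L ^+ 2 = L by rewrite sqr_sqrtr // /L; lra.
have hp : 0 <= u * Num.sqrt b * Num.sqrt c * Num.sqrt L by rewrite !mulr_ge0 //; lra.
have u4 : u ^+ 2 * u ^+ 2 <= u ^+ 2 by nra.
rewrite /L in eL; move: eb ec eL; rewrite !expr2 => eb ec eL; rewrite expr2 in u4.
nra.
Qed.

Lemma Lpow x y (c K : R) : 0 <= x -> 0 < y -> 0 < c ->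
  (forall k, x ^+ k * c <= K * y ^+ k) -> x <= y.
Proof.
move=> x0 y0 c0 H; rewrite leNgt; apply/negP => yx.
have [k hk] := arch (y * K / ((x - y) * c)).
have xyc : 0 < (x - y) * c by rewrite mulr_gt0 // subr_gt0.
rewrite ltr_pdivrMr // in hk.
have b := @bern2 y x k y0 (ltW yx).
have yk : 0 < y ^+ k by rewrite exprn_gt0.
have := H k.
have h1 := ler_wpM2r (ltW c0) b.
have h2 : 0 < y ^+ k * (k%:R * ((x - y) * c) - y * K) by rewrite mulr_gt0 // subr_gt0.
nra.
Qed.

Lemma Lgeo (q c d : R) : 0 < q -> q < 1 -> 0 <= c -> 0 < d ->
  exists N, forall N', (N <= N')%N -> c * q ^+ N' <= d.
Proof.
move=> q0 q1 c0 d0.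
have [N hN] := arch (c * q / ((1 - q) * d)).
have qd : 0 < (1 - q) * d by rewrite mulr_gt0 // subr_gt0.
rewrite ltr_pdivrMr // in hN.
exists N => N' NN'.
have hN' : N%:R <= N'%:R :> R by rewrite ler_nat.
have b := @bern2 q 1 N' q0 (ltW q1); rewrite expr1n mulr1 in b.
rewrite leNgt; apply/negP => hc.
have qN : 0 <= q ^+ N' by rewrite exprn_ge0 // ltW.
have h1 : 0 <= N'%:R * (1 - q) :> R by rewrite mulr_ge0 ?ler0n // subr_ge0 ltW.
have h2 := ler_wpM2l c0 b.
have h3 : N'%:R * (1 - q) * d <= N'%:R * (1 - q) * (c * q ^+ N').
  by rewrite ler_wpM2l // ltW.
nra.
Qed.

Lemma prod_lt1 (x y z : R) : z <= x * y -> x < 1 -> y < 1 -> 0 <= x -> 0 <= y -> z < 1.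
Proof. move=> h1 h2 h3 h4 h5; nra. Qed.

End Reals.
Section Cx.
Variable R : realType.
Local Notation nc := (@ComplexField.Normc.normc R).

Lemma nc_ge0 (z : R[i]) : 0 <= nc z.
Proof. by case: z => a b; exact: sqrtr_ge0. Qed.

Lemma nc_real (x : R) : nc (x%:C)%C = `|x|.
Proof. by rewrite /ComplexField.Normc.normc /= expr0n addr0 sqrtr_sqr. Qed.

Lemma ncD (x y : R[i]) : nc (x + y) <= nc x + nc y.
Proof. exact: le_normcD. Qed.

Lemma ncM (x y : R[i]) : nc (x * y) = nc x * nc y.
Proof. exact: ComplexField.Normc.normcM. Qed.

Lemma nc_sum (I : Type) (s : seq I) (P : pred I) (F : I -> R[i]) :
  nc (\sum_(i <- s | P i) F i) <= \sum_(i <- s | P i) nc (F i).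
Proof.
apply: (big_ind2 (fun x y => nc x <= y)).
- by rewrite ComplexField.Normc.normc0.
- by move=> x1 y1 x2 y2 h1 h2; apply: le_trans (ncD _ _) _; exact: lerD.
- by [].
Qed.

Lemma cmxX n (B : 'M[R]_n) k : cmx (B ^+ k) = (cmx B) ^+ k.
Proof.
elim: k => [|k IH]; first by rewrite !expr0 /cmx map_mx1.
by rewrite !exprS -!mulmxE /cmx map_mxM -[map_mx _ (B ^+ k)]/(cmx _) IH.
Qed.

Lemma cmxB1 n (B : 'M[R]_n) : cmx (1%:M - B) = 1%:M - cmx B.
Proof. by rewrite /cmx map_mxB map_mx1. Qed.

End Cx.

Section Neumann.
Variable K : fieldType.

Lemma neumann n (X : 'M[K]_n) N : (1%:M - X) \in unitmx ->
  invmx (1%:M - X) = \sum_(k < N) X ^+ k + invmx (1%:M - X) *m X ^+ N.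
Proof.
move=> hU.
have H : (1%:M - X) *m (\sum_(k < N) X ^+ k) = 1%:M - X ^+ N.
  elim: N => [|N IH]; first by rewrite big_ord0 mulmx0 expr0 subrr.
  by rewrite big_ord_recr /= mulmxDr IH exprS mulmxBl mul1mx -mulmxE addrA subrK.
have E : 1%:M = (1%:M - X) *m (\sum_(k < N) X ^+ k) + X ^+ N by rewrite H subrK.
rewrite -[LHS]mulmx1 [X in _ *m X = _]E mulmxDr mulmxA.
by rewrite mulVmx // mul1mx.
Qed.

End Neumann.
Local Open Scope classical_set_scope.
Section Spec.
Variable R : realType.
Local Notation nc := (@ComplexField.Normc.normc R).


Lemma sum_ge_mem (s : seq R[i]) (f : R[i] -> R) w :
  (forall z, 0 <= f z) -> w \in s -> f w <= \sum_(z <- s) f z.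
Proof.
move=> f0; elim: s => // a s IH; rewrite in_cons big_cons => /orP [/eqP -> | ws].
  by rewrite lerDl sumr_ge0.
by rewrite (le_trans (IH ws)) // lerDr.
Qed.

Lemma roots_char n (M : 'M[R[i]]_n) : exists rs,
  char_poly M = \prod_(w <- rs) ('X - w%:P) /\ forall w, eigenvalue M w = (w \in rs).
Proof.
have [rs E] := closed_field_poly_normal (char_poly M).
rewrite (monicP (char_poly_monic M)) scale1r in E.
by exists rs; split => // w; rewrite eigenvalue_root_char E root_prod_XsubC.
Qed.

Lemma specrad0 (M : 'M[R[i]]_0) : specrad M = 0.
Proof.
rewrite /specrad.
suff -> : [set nc z | z in [set z : R[i] | eigenvalue M z]] = set0 by exact: sup0.
apply/seteqP; split => x // [z] /=.
by rewrite /eigenvalue /eigenspace [kermx _]flatmx0 eqxx.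
Qed.

Lemma specrad_ub n (M : 'M[R[i]]_n) z : eigenvalue M z -> nc z <= specrad M.
Proof.
move=> ez; have [rs [_ Ers]] := roots_char M.
apply: sup_upper_bound; last by exists z.
split; first by exists (nc z), z.
exists (\sum_(w <- rs) nc w) => _ [w /= ew <-].
by apply: sum_ge_mem => //; [exact: nc_ge0 | rewrite -Ers].
Qed.

Lemma specrad_ge0 n (M : 'M[R[i]]_n) : 0 <= specrad M.
Proof.
case: n M => [|n] M; first by rewrite specrad0.
have [a ea] := Theorem7' M (ltn0Sn n).
exact: le_trans (nc_ge0 a) (specrad_ub ea).
Qed.

Lemma specrad_le n (M : 'M[R[i]]_n) x : 0 <= x ->
  (forall z, eigenvalue M z -> nc z <= x) -> specrad M <= x.
Proof.
case: n M => [|n] M x0 H; first by rewrite specrad0.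
have [a ea] := Theorem7' M (ltn0Sn n).
apply: ge_sup; first by exists (nc a), a.
by move=> _ [w /= ew <-]; exact: H.
Qed.

Lemma unit_lt1 n (M : 'M[R[i]]_n) : specrad M < 1 -> (1%:M - M) \in unitmx.
Proof.
move=> h; apply: contraT => hn.
have e1 : eigenvalue M 1.
  rewrite /eigenvalue /eigenspace kermx_eq0 row_free_unit -opprB -scaleN1r.
  by rewrite unitmxZ ?unitrN1.
have := specrad_ub e1; rewrite ComplexField.Normc.normc1; lra.
Qed.

End Spec.
Section Key.
Variable R : realType.
Local Notation nc := (@ComplexField.Normc.normc R).
Variable m : nat.
Variable M : 'M[R[i]]_m.+1.


Lemma key (s : seq R[i]) rho : (forall z, z \in s -> nc z <= rho) ->
  forall X : 'M_m.+1, horner_mx M (\prod_(z <- s) ('X - z%:P)) *m X = 0 ->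
  forall r, rho < r -> 0 < r ->
  exists K, 0 <= K /\ forall k i j, nc ((M ^+ k *m X) i j) <= K * r ^+ k.
Proof.
elim: s => [|z s IH] hs X.
  rewrite big_nil rmorph1 mul1mx => -> r _ _; exists 0; split => // k i j.
  by rewrite mulmx0 mxE ComplexField.Normc.normc0 mul0r.
rewrite big_cons mulrC rmorphM /= rmorphB /= horner_mx_X horner_mx_C -mulmxE -mulmxA.
set Y := (M - z%:M) *m X => hY r hr r0.
set t := (Num.max rho 0 + r) / 2.
have hm1 : rho <= Num.max rho 0 by rewrite le_max lexx.
have hm2 : 0 <= Num.max rho 0 by rewrite le_max lexx orbT.
have hm3 : Num.max rho 0 < r by rewrite gt_max hr r0.
have t0 : 0 < t by rewrite /t; lra.
have tr : t < r by rewrite /t; lra.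
have rt : rho < t by rewrite /t; lra.
have [K0 [K00 HK0]] := IH (fun w ws => hs w (introT orP (or_intror ws))) Y hY t rt t0.
have zt : nc z <= t by have := hs z (mem_head _ _); lra.
set a := \sum_i \sum_j nc (X i j).
have a0 : 0 <= a by rewrite sumr_ge0 // => i _; rewrite sumr_ge0 // => j _; exact: nc_ge0.
have aX : forall i j, nc (X i j) <= a.
  move=> i j; rewrite /a (bigD1 i) //= (bigD1 j) //= -addrA lerDl addr_ge0 //.
    by rewrite sumr_ge0 // => j' _; exact: nc_ge0.
  by rewrite sumr_ge0 // => i' _; rewrite sumr_ge0 // => j' _; exact: nc_ge0.
set K1 := K0 / t.
have K1t : K1 * t = K0 by rewrite /K1 mulfVK // gt_eqF.
have K10 : 0 <= K1 by rewrite /K1 divr_ge0 // ltW.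
have W : forall k i j, nc ((M ^+ k *m X) i j) <= (a + k%:R * K1) * t ^+ k.
  elim=> [|k IHk] i j.
    by rewrite expr0 mul1mx mul0r addr0 expr0 mulr1.
  have -> : M ^+ k.+1 *m X = z *: (M ^+ k *m X) + M ^+ k *m Y.
    rewrite exprSr -mulmxE -mulmxA /Y mulmxBl mul_scalar_mx.
    by rewrite mulmxBr scalemxAr addrC subrK.
  rewrite mxE [X in nc (X + _)]mxE; apply: le_trans (ncD _ _) _; rewrite ncM.
  have h1 := IHk i j; have h2 := HK0 k i j.
  have hw := nc_ge0 ((M ^+ k *m X) i j).
  have tk : 0 <= t ^+ k by rewrite exprn_ge0 // ltW.
  have h3 : nc z * nc ((M ^+ k *m X) i j) <= t * ((a + k%:R * K1) * t ^+ k).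
    by rewrite ler_pM // nc_ge0.
  rewrite exprS -natr1.
  rewrite -K1t in h2; move: h2 h3; set T := t ^+ k; set kk := k%:R; set w1 := nc (_ i j); set w2 := nc (_ i j); move=> h2 h3; nra.
exists (a + K1 * (t / (r - t))); split.
  by apply: addr_ge0 => //; apply: mulr_ge0 => //; apply: divr_ge0; lra.
move=> k i j; apply: le_trans (W k i j) _.
have hk : k%:R * t ^+ k <= t / (r - t) * r ^+ k.
  by rewrite mulrAC ler_pdivlMr ?subr_gt0 // bern2 // ltW.
have tk : t ^+ k <= r ^+ k by rewrite lerXn2r // ?ltW // nnegrE ltW.
have := ler_wpM2l K10 hk; have := ler_wpM2l a0 tk; nra.
Qed.

End Key.
Section CS.
Variable R : realType.

Lemma CS n (f g : 'I_n -> R) : (forall l, 0 <= f l) -> (forall l, 0 <= g l) ->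
  \sum_l Num.sqrt (f l) * Num.sqrt (g l) <=
  Num.sqrt (\sum_l f l) * Num.sqrt (\sum_l g l).
Proof.
move=> f0 g0.
set S := \sum_l _; set P := \sum_l f l; set Q := \sum_l g l.
have P0 : 0 <= P by rewrite sumr_ge0.
have Q0 : 0 <= Q by rewrite sumr_ge0.
have S0 : 0 <= S by rewrite sumr_ge0 // => l _; rewrite mulr_ge0 ?sqrtr_ge0.
have [Pz|Pp] := eqVneq P 0.
  have fz : forall l, f l = 0.
    by move=> l; move/eqP: Pz; rewrite psumr_eq0 // => /allP/(_ l (mem_index_enum _)) /eqP.
  have -> : S = 0 by rewrite /S big1 // => l _; rewrite fz sqrtr0 mul0r.
  by rewrite Pz sqrtr0 mul0r.
have Pp' : 0 < P by rewrite lt_def Pp P0.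
rewrite -sqrtrM // -(ger0_norm S0) -sqrtr_sqr ler_sqrt ?mulr_ge0 //.
have E : \sum_l (S * Num.sqrt (f l) - P * Num.sqrt (g l)) ^+ 2 = P * (P * Q - S ^+ 2).
  rewrite (eq_bigr (fun l => S ^+ 2 * f l - (2 * S * P) * (Num.sqrt (f l) * Num.sqrt (g l))
                       + P ^+ 2 * g l)); last first.
    move=> l _; have ef := sqr_sqrtr (f0 l); have eg := sqr_sqrtr (g0 l).
    move: ef eg; set x := Num.sqrt (f l); set y := Num.sqrt (g l) => ef eg.
    rewrite -ef -eg; ring.
  rewrite big_split sumrB /= -!mulr_sumr -/P -/Q -/S; ring.
have : 0 <= P * (P * Q - S ^+ 2) by rewrite -E sumr_ge0 // => l _; exact: sqr_ge0.
by rewrite pmulr_rge0 // subr_ge0.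
Qed.

End CS.

Section Main.
Variable R : realType.
Local Notation nc := (@ComplexField.Normc.normc R).

Lemma gelfand n (M : 'M[R[i]]_n) r : specrad M < r ->
  exists K, 0 <= K /\ forall k i j, nc ((M ^+ k) i j) <= K * r ^+ k.
Proof.
case: n M => [|m] M hr; first by exists 0; split => // k [].
have r0 : 0 < r := le_lt_trans (specrad_ge0 M) hr.
have [rs [E Ers]] := roots_char M.
have H0 : horner_mx M (\prod_(w <- rs) ('X - w%:P)) *m 1%:M = 0.
  by rewrite -E Cayley_Hamilton mul0mx.
have hs : forall z, z \in rs -> nc z <= specrad M.
  by move=> z zs; apply: specrad_ub; rewrite Ers.
have [K [K0 HK]] := @key R m M rs (specrad M) hs 1%:M H0 r hr r0.
by exists K; split => // k i j; have := HK k i j; rewrite mulmx1.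
Qed.

Variable n : nat.
Variables (A : 'M[R[i]]_n) (B C : 'M[R]_n).
Hypothesis hB : forall i j, 0 <= B i j.
Hypothesis hC : forall i j, 0 <= C i j.
Hypothesis hA : forall i j, nc (A i j) <= Num.sqrt (B i j) * Num.sqrt (C i j).

Lemma pow_ge0 (X : 'M[R]_n) k : (forall i j, 0 <= X i j) -> forall i j, 0 <= (X ^+ k) i j.
Proof.
move=> hX; elim: k => [|k IH] i j.
  by rewrite expr0 mxE ler0n.
rewrite exprSr -mulmxE mxE sumr_ge0 // => l _; exact: mulr_ge0.
Qed.

Lemma powbound k i j :
  nc ((A ^+ k) i j) <= Num.sqrt ((B ^+ k) i j) * Num.sqrt ((C ^+ k) i j).
Proof.
elim: k i j => [|k IH] i j.
  rewrite !expr0 !mxE; case: (i == j); rewrite ?mulr1n ?mulr0n.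
    by rewrite ComplexField.Normc.normc1 sqrtr1 mulr1.
  by rewrite ComplexField.Normc.normc0 sqrtr0 mulr0.
rewrite !exprSr -!mulmxE !mxE.
apply: le_trans (nc_sum _ _ _) _.
apply: le_trans (CS _ _); last first.
- by move=> l; rewrite mulr_ge0 // pow_ge0.
- by move=> l; rewrite mulr_ge0 // pow_ge0.
apply: ler_sum => l _; rewrite ncM.
rewrite !sqrtrM ?pow_ge0 //.
apply: le_trans (ler_pM (nc_ge0 _) (nc_ge0 _) (IH i l) (hA l j)) _.
by rewrite mulrACA.
Qed.


Lemma ncX (z : R[i]) k : nc (z ^+ k) = nc z ^+ k.
Proof.
elim: k => [|k IH]; first by rewrite !expr0 ComplexField.Normc.normc1.
by rewrite !exprS ncM IH.
Qed.

Lemma sqrtX (x : R) k : 0 <= x -> Num.sqrt (x ^+ k) = Num.sqrt x ^+ k.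
Proof.
move=> x0; elim: k => [|k IH]; first by rewrite !expr0 sqrtr1.
by rewrite !exprS sqrtrM // IH.
Qed.

Lemma realbound (X : 'M[R]_n) r : specrad (cmx X) < r ->
  exists K, 0 <= K /\ forall k i j, (X ^+ k) i j <= K * r ^+ k.
Proof.
move=> h; have [K [K0 HK]] := gelfand h; exists K; split => // k i j.
have := HK k i j; rewrite -cmxX /cmx mxE nc_real => h2.
exact: le_trans (ler_norm _) h2.
Qed.

Lemma sqrtbound (X : 'M[R]_n) (hX : forall i j, 0 <= X i j) r : specrad (cmx X) < r ->
  exists K, 0 <= K /\ forall k i j, Num.sqrt ((X ^+ k) i j) <= K * Num.sqrt r ^+ k.
Proof.
move=> h; have [K [K0 HK]] := realbound h.
have r0 : 0 <= r by have := specrad_ge0 (cmx X); lra.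
exists (Num.sqrt K); split; first exact: sqrtr_ge0.
move=> k i j; rewrite -sqrtX // -sqrtrM // ler_sqrt ?HK // mulr_ge0 // exprn_ge0 //.
Qed.

Lemma part1 : specrad A <= Num.sqrt (specrad (cmx B)) * Num.sqrt (specrad (cmx C)).
Proof.
apply: specrad_le; first by rewrite mulr_ge0 ?sqrtr_ge0.
move=> z /eigenvalueP [v vA vnz].
have [j0 vj0] : exists j, v 0 j != 0.
  case: (pickP (fun j => v 0 j != 0)) => [j hj | h]; first by exists j.
  exfalso; move/negP: vnz; apply; apply/eqP/matrixP => i j.
  by rewrite (ord1 i) mxE; move/negbFE: (h j) => /eqP.
have vpow : forall k, v *m A ^+ k = z ^+ k *: v.
  elim=> [|k IH]; first by rewrite !expr0 mulmx1 scale1r.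
  by rewrite exprS -mulmxE mulmxA vA -scalemxAl IH scalerA -exprS.
have b0 := specrad_ge0 (cmx B); have c0 := specrad_ge0 (cmx C).
apply: L1 => // d d0 _.
suff h : nc z <= Num.sqrt (specrad (cmx B) + d) * Num.sqrt (specrad (cmx C) + d).
  by apply: (le_trans h); rewrite lerDl ltW.
have [KB [KB0 HB]] := sqrtbound hB (ltr_pwDr d0 (lexx _)).
have [KC [KC0 HC]] := sqrtbound hC (ltr_pwDr d0 (lexx _)).
pose D := \sum_i nc (v 0 i).
have D0 : 0 <= D by rewrite sumr_ge0 // => i _; exact: nc_ge0.
have cv : 0 < nc (v 0 j0).
  rewrite lt_def nc_ge0 andbT; apply: contra vj0 => /eqP h.
  by apply/eqP; apply: ComplexField.Normc.eq0_normc.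
have y0 : 0 < Num.sqrt (specrad (cmx B) + d) * Num.sqrt (specrad (cmx C) + d).
  have h1 : 0 < specrad (cmx B) + d by exact: ltr_wpDl b0 d0.
  have h2 : 0 < specrad (cmx C) + d by exact: ltr_wpDl c0 d0.
  apply: mulr_gt0; rewrite sqrtr_gt0; [exact: h1 | exact: h2].
apply: (@Lpow R (nc z) _ (nc (v 0 j0)) (D * (KB * KC)) (nc_ge0 z) y0 cv).
move=> k.
have -> : nc z ^+ k * nc (v 0 j0) = nc ((v *m A ^+ k) 0 j0).
  by rewrite vpow mxE ncM ncX.
rewrite mxE; apply: le_trans (nc_sum _ _ _) _.
rewrite exprMn -mulrA mulr_suml; apply: ler_sum => i _; rewrite ncM.
apply: ler_wpM2l; first exact: nc_ge0.
apply: le_trans (powbound k i j0) _.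
rewrite mulrACA; apply: ler_pM; rewrite ?sqrtr_ge0 //.
Qed.

Lemma bigmax_le m (F : 'I_m -> R) T : 0 <= T -> (forall i, F i <= T) ->
  \big[Num.max/0]_(i < m) F i <= T.
Proof. by move=> T0 H; elim/big_rec: _ => // i x _ hx; rewrite ge_max H hx. Qed.

Lemma le_bigmax_seq (I : eqType) (s : seq I) (F : I -> R) i : i \in s ->
  F i <= \big[Num.max/0]_(j <- s) F j.
Proof.
elim: s => // a s IH; rewrite in_cons big_cons le_max => /orP [/eqP -> | h].
  by rewrite lexx.
by rewrite IH ?orbT.
Qed.

Lemma le_bigmax m (F : 'I_m -> R) i : F i <= \big[Num.max/0]_(i < m) F i.
Proof. exact: le_bigmax_seq (mem_index_enum i). Qed.

Lemma errC (P Q : 'M[R[i]]_n) e i j : (forall l j, nc (Q l j) <= e) ->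
  nc ((P *m Q) i j) <= (\sum_l nc (P i l)) * e.
Proof.
move=> hQ; rewrite mxE mulr_suml; apply: le_trans (nc_sum _ _ _) _.
by apply: ler_sum => l _; rewrite ncM ler_wpM2l ?nc_ge0.
Qed.

Lemma errR (P Q : 'M[R]_n) e i j : (forall l j, `|Q l j| <= e) ->
  `|(P *m Q) i j| <= (\sum_l `|P i l|) * e.
Proof.
move=> hQ; rewrite mxE mulr_suml; apply: le_trans (ler_norm_sum _ _ _) _.
by apply: ler_sum => l _; rewrite normrM ler_wpM2l.
Qed.

Lemma sum_const_n (c : R) : \sum_(j < n) c = n%:R * c.
Proof. by rewrite sumr_const card_ord mulr_natl. Qed.

Lemma realerr (X : 'M[R]_n) (hX : forall i j, 0 <= X i j) i d :
  (1%:M - X) \in unitmx -> specrad (cmx X) < 1 -> 0 < d ->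
  exists N0, forall N, (N0 <= N)%N ->
    \sum_j \sum_(k < N) (X ^+ k) i j <= normInfR (invmx (1%:M - X)) + d.
Proof.
move=> hu hs d0.
have rho0 := specrad_ge0 (cmx X).
have hr : specrad (cmx X) < (specrad (cmx X) + 1) / 2.
  by move: hs rho0; move: (specrad _) => rho; lra.
have [r0 r1] : 0 < (specrad (cmx X) + 1) / 2 /\ (specrad (cmx X) + 1) / 2 < 1.
  by move: hs rho0; move: (specrad _) => rho; lra.
move: hr r0 r1; move: ((specrad (cmx X) + 1) / 2) => r hr r0 r1.
have [K [K0 HK]] := realbound hr.
set Xi := invmx (1%:M - X).
set S := \sum_l `|Xi i l|.
have S0 : 0 <= S by rewrite sumr_ge0.
have [N0 HN0] := Lgeo r0 r1 (mulr_ge0 (mulr_ge0 (ler0n _ n) S0) K0) d0.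
exists N0 => N hN.
have E : forall j, \sum_(k < N) (X ^+ k) i j = Xi i j - (Xi *m X ^+ N) i j.
  by move=> j; rewrite /Xi {1}(neumann N hu) mxE summxE addrK.
have hXN : forall l j, `|(X ^+ N) l j| <= K * r ^+ N.
  by move=> l j; rewrite ger0_norm ?HK // pow_ge0.
have H1 : forall j, \sum_(k < N) (X ^+ k) i j <= `|Xi i j| + S * (K * r ^+ N).
  move=> j; rewrite E; apply: lerD; first exact: ler_norm.
  by apply: le_trans _ (errR Xi i j hXN); rewrite -normrN ler_norm.
apply: le_trans (ler_sum _ (fun j _ => H1 j)) _.
rewrite big_split /= sum_const_n; apply: lerD.
  exact: (le_bigmax (fun i => \sum_j `|Xi i j|) i).
have := HN0 N hN; by rewrite !mulrA.
Qed.

Lemma cplxerr (X : 'M[R[i]]_n) i d :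
  (1%:M - X) \in unitmx -> specrad X < 1 -> 0 < d ->
  exists N0, forall N, (N0 <= N)%N ->
    \sum_j nc (invmx (1%:M - X) i j) <= \sum_j \sum_(k < N) nc ((X ^+ k) i j) + d.
Proof.
move=> hu hs d0.
have rho0 := specrad_ge0 X.
have hr : specrad X < (specrad X + 1) / 2.
  by move: hs rho0; move: (specrad _) => rho; lra.
have [r0 r1] : 0 < (specrad X + 1) / 2 /\ (specrad X + 1) / 2 < 1.
  by move: hs rho0; move: (specrad _) => rho; lra.
move: hr r0 r1; move: ((specrad X + 1) / 2) => r hr r0 r1.
have [K [K0 HK]] := gelfand hr.
set Xi := invmx (1%:M - X).
set S := \sum_l nc (Xi i l).
have S0 : 0 <= S by rewrite sumr_ge0 // => l _; exact: nc_ge0.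
have [N0 HN0] := Lgeo r0 r1 (mulr_ge0 (mulr_ge0 (ler0n _ n) S0) K0) d0.
exists N0 => N hN.
have H1 : forall j, nc (Xi i j) <= \sum_(k < N) nc ((X ^+ k) i j) + S * (K * r ^+ N).
  move=> j; rewrite /Xi {1}(neumann N hu) mxE summxE.
  apply: le_trans (ncD _ _) _; apply: lerD; first exact: nc_sum.
  exact: errC.
apply: le_trans (ler_sum _ (fun j _ => H1 j)) _.
rewrite big_split /= sum_const_n; apply: lerD => //.
have := HN0 N hN; by rewrite !mulrA.
Qed.

Lemma normInfR_ge0 m (X : 'M[R]_m) : 0 <= normInfR X.
Proof.
rewrite /normInfR; elim/big_rec: _ => // i x _ hx.
by rewrite le_max hx orbT.
Qed.

Lemma part2 : Num.max (specrad (cmx B)) (specrad (cmx C)) < 1 ->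
  specrad A < 1 /\ (1%:M - A) \in unitmx /\
  normInfC (invmx (1%:M - A)) <=
    Num.sqrt (normInfR (invmx (1%:M - B))) * Num.sqrt (normInfR (invmx (1%:M - C))).
Proof.
move=> hmax.
have [hb hc] : specrad (cmx B) < 1 /\ specrad (cmx C) < 1.
  by move: hmax; rewrite gt_max => /andP.
have hAs : specrad A < 1.
  have p1 := part1.
  have s1 : Num.sqrt (specrad (cmx B)) < 1.
    rewrite -sqrtr1 ltr_sqrt; [exact: hb | exact: ltr01].
  have s2 : Num.sqrt (specrad (cmx C)) < 1.
    rewrite -sqrtr1 ltr_sqrt; [exact: hc | exact: ltr01].
  have t1 := sqrtr_ge0 (specrad (cmx B)); have t2 := sqrtr_ge0 (specrad (cmx C)).
  exact: prod_lt1 p1 s1 s2 t1 t2.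
have hAu := unit_lt1 hAs.
have hBu : (1%:M - B) \in unitmx.
  by have := unit_lt1 hb; rewrite -cmxB1 /cmx map_unitmx.
have hCu : (1%:M - C) \in unitmx.
  by have := unit_lt1 hc; rewrite -cmxB1 /cmx map_unitmx.
split => //; split => //.
have nB0 := normInfR_ge0 (invmx (1%:M - B)).
have nC0 := normInfR_ge0 (invmx (1%:M - C)).
apply: bigmax_le; first by rewrite mulr_ge0 ?sqrtr_ge0.
move=> i; apply: L1 => // d d0 _.
have [N1 H1] := cplxerr i hAu hAs d0.
have [N2 H2] := realerr hB i hBu hb d0.
have [N3 H3] := realerr hC i hCu hc d0.
pose N := maxn N1 (maxn N2 N3).
have h1 := H1 N (leq_maxl _ _).
have h2 := H2 N (leq_trans (leq_maxl _ _) (leq_maxr _ _)).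
have h3 := H3 N (leq_trans (leq_maxr _ _) (leq_maxr _ _)).
apply: le_trans h1 _; apply: lerD => //.
apply: le_trans (_ : _ <= \sum_j Num.sqrt (\sum_(k < N) (B ^+ k) i j) *
                              Num.sqrt (\sum_(k < N) (C ^+ k) i j)) _.
  apply: ler_sum => j _.
  apply: le_trans (_ : _ <= \sum_(k < N) Num.sqrt ((B ^+ k) i j) * Num.sqrt ((C ^+ k) i j)) _.
    by apply: ler_sum => k _; exact: powbound.
  by apply: CS => k; apply: pow_ge0.
apply: le_trans (CS _ _) _.
- by move=> j; rewrite sumr_ge0 // => k _; apply: pow_ge0.
- by move=> j; rewrite sumr_ge0 // => k _; apply: pow_ge0.
apply: ler_pM; rewrite ?sqrtr_ge0 // ler_sqrt //; apply: addr_ge0 => //; exact: ltW.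
Qed.

End Main.

Unset Implicit Arguments.
Local Close Scope classical_set_scope.

Theorem lemma8 (R : realType) (n : nat) (A : 'M[R[i]]_n) (B C : 'M[R]_n)
  (hB : forall i j, 0 <= B i j) (hC : forall i j, 0 <= C i j)
  (hA : forall i j, ComplexField.Normc.normc (A i j) <= Num.sqrt (B i j) * Num.sqrt (C i j)) :
  specrad A <= Num.sqrt (specrad (cmx B)) * Num.sqrt (specrad (cmx C)) /\
  (Num.max (specrad (cmx B)) (specrad (cmx C)) < 1 ->
     specrad A < 1 /\ (1%:M - A) \in unitmx /\
     normInfC (invmx (1%:M - A)) <=
       Num.sqrt (normInfR (invmx (1%:M - B))) * Num.sqrt (normInfR (invmx (1%:M - C)))).
Proof.
split; first exact: part1 hA.
exact: part2 hB hC hA.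
Qed.
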